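(* Let $\widehat p\in(0,\infty)^C$ be a probability vector ($\sum_c\widehat p_c=1$), $\varepsilon\ge0$ and $\rho\in\mathbb R_+^C$ with $\sum_{c=1}^C\widehat p_c\rho_c\le\varepsilon$. The set \[\mathcal Q=\Big\{q\in\mathbb R_+^C:\sum_{c=1}^Cq_c=1,\ \sum_{c=1}^Cq_c(\log q_c-\log\widehat p_c+\rho_c)\le\varepsilon\Big\}\] is compact and convex, and its support function satisfies, for every $t\in\mathbb R^C$, \[h_{\mathcal Q}(t):=\sup_{q\in\mathcal Q}q^\top t=\inf_{\alpha\in\mathbb R,\ \beta>0}\Big\{\alpha+\beta\varepsilon+\beta\sum_{c=1}^C\widehat p_c\exp\Big(\frac{t_c-\alpha}{\beta}-\rho_c-1\Big)\Big\}.\]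
   Context: The convention $0\log0=0$ is used. *)

(* Defs.v *)
(* Vectors q in R^C are row vectors 'rV[R]_C
   (coordinates q 0 c), with the canonical matrix topology (= Euclidean). *)
From HB Require Import structures.
From mathcomp Require Import all_boot all_order all_algebra.
From mathcomp Require Import all_classical all_reals all_analysis.
Set Implicit Arguments. Unset Strict Implicit. Unset Printing Implicit Defensive.
Import Order.TTheory GRing.Theory Num.Theory.
Import numFieldNormedType.Exports.
Local Open Scope classical_set_scope.
Local Open Scope ring_scope.

(* The ambiguity set Q (KL-type ball with shift rho), with ln 0 = 0 so that
   the convention 0 log 0 = 0 holds. *)
Definition Qset (R : realType) (C : nat) (phat rho : 'I_C -> R) (eps : R)
  : set 'rV[R]_C :=
  [set q | (forall c, 0 <= q 0 c) /\ \sum_(c < C) q 0 c = 1 /\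
           \sum_(c < C) q 0 c * (ln (q 0 c) - ln (phat c) + rho c) <= eps].

Definition convex_vset (R : realType) (C : nat) (S : set 'rV[R]_C) : Prop :=
  forall q1 q2, S q1 -> S q2 -> forall l : R, 0 <= l <= 1 ->
    S (l *: q1 + (1 - l) *: q2).

Definition support_fun (R : realType) (C : nat) (S : set 'rV[R]_C)
  (t : 'I_C -> R) : \bar R :=
  ereal_sup [set (\sum_(c < C) q 0 c * t c)%:E | q in S].

(* Main.v *)
Require Import Defs.
From HB Require Import structures.
From mathcomp Require Import all_boot all_order all_algebra.
From mathcomp Require Import all_classical all_reals all_analysis.
From mathcomp Require Import ring lra.
Import Order.TTheory GRing.Theory Num.Theory.
Import numFieldNormedType.Exports.
Local Open Scope classical_set_scope.
Local Open Scope ring_scope.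

Lemma ln_le_sub1 {R : realType} (x : R) : 0 < x -> ln x <= x - 1.
Proof.
move=> x0; have := @le_ln1Dx R (x - 1).
rewrite addrCA subrr addr0; apply; lra.
Qed.

Lemma xlog_ge {R : realType} (a b : R) : 0 <= a -> 0 < b -> a - b <= a * (ln a - ln b).
Proof.
move=> a0 b0; have [->|ap] := eqVneq a 0; first by rewrite mul0r; lra.
have ap' : 0 < a by rewrite lt_def ap a0.
have := @ln_le_sub1 _ _ (divr_gt0 b0 ap').
rewrite ln_div ?posrE // => h.
have h2 : a * (ln b - ln a) <= a * (b / a - 1) by rewrite ler_wpM2l.
have : a * (b / a) = b by field; rewrite ap.
nra.
Qed.

Lemma young {R : realType} (x y p : R) : 0 <= x -> 0 < p ->
  x * y <= x * (ln x - ln p) + p * expR (y - 1).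
Proof.
move=> x0 p0; have [->|xp] := eqVneq x 0.
  rewrite !mul0r add0r; apply: mulr_ge0; [lra| exact: expR_ge0].
have xp' : 0 < x by rewrite lt_def xp x0.
have h := expR_ge1Dx (y - 1 - (ln x - ln p)).
have e : x * expR (y - 1 - (ln x - ln p)) = p * expR (y - 1).
  rewrite (expRB (y - 1)) (expRB (ln x)) !lnK ?posrE //.
  field; rewrite ?gt_eqF //.
have : x * (1 + (y - 1 - (ln x - ln p))) <= x * expR (y - 1 - (ln x - ln p)).
  by rewrite ler_wpM2l // ltW.
nra.
Qed.

Lemma xlnx_convex {R : realType} (x y l : R) : 0 <= x -> 0 <= y -> 0 <= l <= 1 ->
  (l*x+(1-l)*y) * ln (l*x+(1-l)*y) <= l*(x*ln x) + (1-l)*(y*ln y).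
Proof.
move=> x0 y0 /andP[l0 l1].
set z := l*x+(1-l)*y.
have z0 : 0 <= z by rewrite /z; nra.
have [z00|zp] := eqVneq z 0.
  have lx : l * x = 0 by rewrite /z in z00; nra.
  have ly : (1 - l) * y = 0 by rewrite /z in z00; nra.
  by rewrite z00 mul0r !mulrA lx ly !mul0r addr0.
have zp' : 0 < z by rewrite lt_def zp z0.
have h1 := @xlog_ge _ _ _ x0 zp'.
have h2 := @xlog_ge _ _ _ y0 zp'.
have h1' : l * (x - z) <= l * (x * (ln x - ln z)) by rewrite ler_wpM2l.
have h2' : (1-l) * (y - z) <= (1-l) * (y * (ln y - ln z)) by rewrite ler_wpM2l //; lra.
rewrite /z in h1' h2' *; nra.
Qed.

Lemma exp_quad {R : realType} (x : R) : `|x| <= 1/2 -> expR x - 1 - x <= 2 * x^+2.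
Proof.
move=> hx; have := expR_ge1Dx (- x); rewrite expRN => h.
have ex := expR_gt0 x.
have hx' : -(1/2) <= x <= 1/2 by rewrite -ler_norml.
case/andP: hx' => hx1 hx2.
have : (1 - x) * expR x <= 1.
  have : (1 - x) <= (expR x)^-1 by lra.
  move/(ler_wpM2r (ltW ex)); rewrite mulVf ?gt_eqF //.
rewrite expr2; nra.
Qed.


Definition phi {R : realType} {n : nat} (p rho q : 'I_n -> R) : R :=
  \sum_(c < n) q c * (ln (q c) - ln (p c) + rho c).
Definition Zs {R : realType} {n : nat} (p s : 'I_n -> R) : R :=
  \sum_(c < n) p c * expR (s c).
Definition gibbs {R : realType} {n : nat} (p s : 'I_n -> R) (c : 'I_n) : R :=
  p c * expR (s c) / Zs p s.

Lemma Zs_gt0 {R : realType} {n : nat} (p s : 'I_n -> R) :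
  (forall c, 0 < p c) -> \sum_(c < n) p c = 1 -> 0 < Zs p s.
Proof.
move=> hp hs.
have hn : forall c : 'I_n, true -> 0 <= p c * expR (s c).
  by move=> c _; apply: mulr_ge0; [exact: ltW | exact: expR_ge0].
rewrite lt_def; apply/andP; split; last exact: sumr_ge0.
apply/negP => /eqP/(psumr_eq0P hn) h.
have : \sum_(c < n) p c = 0.
  apply: big1 => c _; have := h c isT.
  by move/eqP; rewrite mulf_eq0 expR_eq0 orbF => /eqP.
by rewrite hs => /eqP; rewrite oner_eq0.
Qed.

Lemma gibbs_gt0 {R : realType} {n : nat} (p s : 'I_n -> R) c :
  (forall c, 0 < p c) -> \sum_(c < n) p c = 1 -> 0 < gibbs p s c.
Proof.
move=> hp hs; rewrite /gibbs; apply: divr_gt0; last exact: Zs_gt0.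
by apply: mulr_gt0 => //; exact: expR_gt0.
Qed.

Lemma gibbs_sum1 {R : realType} {n : nat} (p s : 'I_n -> R) :
  (forall c, 0 < p c) -> \sum_(c < n) p c = 1 -> \sum_(c < n) gibbs p s c = 1.
Proof.
move=> hp hs; rewrite /gibbs -mulr_suml -/(Zs p s) divff //.
by rewrite gt_eqF // Zs_gt0.
Qed.

Lemma gibbs_ln {R : realType} {n : nat} (p s : 'I_n -> R) c :
  (forall c, 0 < p c) -> \sum_(c < n) p c = 1 ->
  ln (gibbs p s c) = ln (p c) + s c - ln (Zs p s).
Proof.
move=> hp hs; have Z0 := Zs_gt0 p s hp hs.
rewrite /gibbs ln_div ?posrE ?lnM ?posrE ?expRK //.
  exact: expR_gt0.
by apply: mulr_gt0 => //; exact: expR_gt0.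
Qed.

Lemma phi_gibbs {R : realType} {n : nat} (p rho s : 'I_n -> R) :
  (forall c, 0 < p c) -> \sum_(c < n) p c = 1 ->
  phi p rho (gibbs p s) = \sum_(c < n) gibbs p s c * (s c + rho c) - ln (Zs p s).
Proof.
move=> hp hs.
have -> : phi p rho (gibbs p s) =
   \sum_(c < n) (gibbs p s c * (s c + rho c) - gibbs p s c * ln (Zs p s)).
  by apply: eq_bigr => c _; rewrite gibbs_ln //; ring.
by rewrite sumrB -mulr_suml gibbs_sum1 // mul1r.
Qed.

Lemma KL_ge0 {R : realType} {n : nat} (q r : 'I_n -> R) :
  (forall c, 0 <= q c) -> (forall c, 0 < r c) -> \sum_(c < n) q c = \sum_(c < n) r c ->
  0 <= \sum_(c < n) q c * (ln (q c) - ln (r c)).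
Proof.
move=> hq hr hs.
apply: (@le_trans _ _ (\sum_(c < n) (q c - r c))).
  by rewrite sumrB hs subrr.
by apply: ler_sum => c _; apply: xlog_ge.
Qed.

Lemma phi_ge0 {R : realType} {n : nat} (p rho q : 'I_n -> R) :
  (forall c, 0 < p c) -> \sum_(c < n) p c = 1 -> (forall c, 0 <= rho c) ->
  (forall c, 0 <= q c) -> \sum_(c < n) q c = 1 -> 0 <= phi p rho q.
Proof.
move=> hp hs hr hq hqs.
have -> : phi p rho q = \sum_(c < n) q c * (ln (q c) - ln (p c)) + \sum_(c < n) q c * rho c.
  by rewrite -big_split; apply: eq_bigr => c _ /=; ring.
apply: addr_ge0; first by apply: KL_ge0 => //; rewrite hs.
by apply: sumr_ge0 => c _; apply: mulr_ge0.
Qed.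

Lemma phi_convex {R : realType} {n : nat} (p rho q1 q2 : 'I_n -> R) (l : R) :
  (forall c, 0 <= q1 c) -> (forall c, 0 <= q2 c) -> 0 <= l <= 1 ->
  phi p rho (fun c => l * q1 c + (1 - l) * q2 c) <= l * phi p rho q1 + (1 - l) * phi p rho q2.
Proof.
move=> h1 h2 hl; rewrite /phi !mulr_sumr -big_split /=.
apply: ler_sum => c _.
have := @xlnx_convex _ _ _ _ (h1 c) (h2 c) hl.
have e : forall z, z * (ln z - ln (p c) + rho c) = z * ln z + z * (rho c - ln (p c)) by move=> z; ring.
have e2 : l * (q1 c * (ln (q1 c) - ln (p c) + rho c)) + (1 - l) * (q2 c * (ln (q2 c) - ln (p c) + rho c))
  = l * (q1 c * ln (q1 c)) + (1 - l) * (q2 c * ln (q2 c)) + (l * q1 c + (1 - l) * q2 c) * (rho c - ln (p c)) by ring.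
by rewrite e e2 => h; apply: lerD.
Qed.

Lemma weak_dual {R : realType} {n : nat} (p rho q t : 'I_n -> R) (eps alpha beta : R) :
  (forall c, 0 < p c) -> (forall c, 0 <= q c) -> \sum_(c < n) q c = 1 ->
  phi p rho q <= eps -> 0 < beta ->
  \sum_(c < n) q c * t c <= alpha + beta * eps + beta * \sum_(c < n)
                          p c * expR ((t c - alpha) / beta - rho c - 1).
Proof.
move=> hp hq hqs hphi hb.
have key : forall c, q c * t c <= q c * alpha + beta * (q c * (ln (q c) - ln (p c) + rho c))
     + beta * (p c * expR ((t c - alpha) / beta - rho c - 1)).
  move=> c; have := @young _ (q c) ((t c - alpha) / beta - rho c) (p c) (hq c) (hp c).
  move/(ler_wpM2l (ltW hb)).
  have e : beta * (q c * ((t c - alpha) / beta - rho c)) = q c * t c - q c * alpha - beta * (q c * rho c).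
    by field; rewrite gt_eqF.
  rewrite e; lra.
apply: (le_trans (ler_sum _ (fun c _ => key c))).
rewrite !big_split /= -!mulr_sumr -mulr_suml hqs mul1r.
rewrite -/(phi p rho q).
have : beta * phi p rho q <= beta * eps by rewrite ler_wpM2l // ltW.
lra.
Qed.


Lemma xlnx_small {R : realType} (e y : R) : 0 < e -> 0 < y -> y < expR (- (2 / e)) ->
  y * - ln y < e.
Proof.
move=> e0 y0 hy.
have hl : ln y < - (2 / e).
  by rewrite -(expRK (- (2 / e))) ltr_ln ?posrE ?expR_gt0.
set u := - ln y.
have hu : 2 / e < u by rewrite /u; lra.
have u0 : 0 < u by apply: lt_trans hu; apply: divr_gt0.
have yE : y * expR u = 1 by rewrite /u expRN lnK ?posrE // divff // gt_eqF.
have hE := @expR_ge1Dxn R u 1 (ltW u0).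
have f2 : ((2`!)%:R : R) = 2 by have -> : (2`! = 2)%N by [].
rewrite f2 in hE.
have h1 : y * (1 + u ^+ 2 / 2) <= y * expR u by rewrite ler_wpM2l // ltW.
rewrite yE in h1.
have h2 : y * u * u <= 2 by rewrite expr2 in h1; nra.
have h3 : 2 < u * e by rewrite -(ltr_pdivrMr _ _ e0).
nra.
Qed.

Lemma xlnx_cont {R : realType} (x : R) : {for x, continuous (fun y : R => y * ln y)}.
Proof.
have [x0|x0|->] := ltgtP x 0.
- apply: (near_cst_continuous 0).
  apply/nbhs_ballP; exists (- x); first by rewrite /= oppr_gt0.
  move=> y /=; rewrite /ball /= => hy.
  have y0 : y < 0.
    by move: hy; rewrite ltr_norml => /andP [h1 h2]; lra.
  by rewrite ln0 ?mulr0 // ltW.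
- apply: (@continuousM R R (fun y => y) (@ln R) x).
    exact: cvg_id.
  exact: continuous_ln.
- apply/cvgrPdist_lt => e e0.
  have d0 : 0 < Num.min 1 (expR (- (2 / e))).
    by rewrite lt_min ltr01 expR_gt0.
  apply/nbhs_ballP; exists (Num.min 1 (expR (- (2 / e)))) => //.
  move=> y /=; rewrite /ball /= sub0r normrN lt_min => /andP [hy1 hy2].
  rewrite ln0 // mul0r sub0r normrN.
  have [y0|y0] := leP y 0.
    by rewrite ln0 // mulr0 normr0.
  have yy : y < expR (- (2 / e)) by apply: le_lt_trans hy2; exact: ler_norm.
  have yl : y <= 1 by apply: ltW; apply: le_lt_trans hy1; exact: ler_norm.
  have := ln_le0 yl => hl.
  rewrite -normrN -mulrN ger0_norm; last by apply: mulr_ge0; lra.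
  exact: xlnx_small.
Qed.


Lemma sum_cont {R : realType} {T : topologicalType} {n : nat} (f : 'I_n -> T -> R) (x : T) :
  (forall c, {for x, continuous (f c)}) ->
  {for x, continuous (fun y => \sum_(c < n) f c y)}.
Proof.
move=> hf.
suff : forall s : seq 'I_n, {for x, continuous (fun y => \sum_(c <- s) f c y)} by apply.
elim => [|a s IH].
  have -> : (fun y => \sum_(c <- [::]) f c y) = (fun _ => 0) by apply: funext => y; rewrite big_nil.
  exact: cvg_cst.
have -> : (fun y => \sum_(c <- a :: s) f c y) = (fun y => f a y + \sum_(c <- s) f c y).
  by apply: funext => y; rewrite big_cons.
exact: (@continuousD R R^o T (f a) (fun y => \sum_(c <- s) f c y) x (hf a) IH).
Qed.

Lemma term_cont {R : realType} (a b : R) (y : R) :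
  {for y, continuous (fun z : R => z * (ln z - a + b))}.
Proof.
have -> : (fun z : R => z * (ln z - a + b)) = (fun z => z * ln z + z * (b - a)).
  by apply: funext => z; ring.
apply: (@continuousD R R^o R (fun z => z * ln z) (fun z => z * (b - a)) y).
  exact: xlnx_cont.
apply: (@continuousM R R (fun z => z) (fun _ => b - a) y); first exact: cvg_id.
exact: cvg_cst.
Qed.

Lemma Q_closed {R : realType} {n : nat} (phat rho : 'I_n -> R) (eps : R) :
  closed (Qset phat rho eps).
Proof.
have -> : Qset phat rho eps =
  (\bigcap_(c in setT) ((fun q : 'rV[R]_n => q 0 c) @^-1` [set x | 0 <= x])) `&`
  (((fun q : 'rV[R]_n => \sum_(c < n) q 0 c) @^-1` [set x | x = 1]) `&`
   ((fun q : 'rV[R]_n => \sum_(c < n) q 0 c * (ln (q 0 c) - ln (phat c) + rho c))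
      @^-1` [set x | x <= eps])).
  apply/seteqP; split => q /=.
    by move=> [h1 [h2 h3]]; split => // c _; apply: h1.
  by move=> [h1 [h2 h3]]; split => // c; apply: h1.
apply: closedI.
  apply: closed_bigI => c _; apply: preimage_closed; last exact: closed_ge.
  by move=> q _; exact: coord_continuous.
apply: closedI; apply: preimage_closed; try exact: closed_eq; try exact: closed_le.
  move=> q _; apply: sum_cont => c; exact: coord_continuous.
move=> q _; apply: sum_cont => c.
apply: (@continuous_comp _ _ _ (fun q : 'rV[R]_n => q 0 c) (fun z => z * (ln z - ln (phat c) + rho c))).
  exact: coord_continuous.
exact: term_cont.
Qed.

Lemma le_sum1 {R : realType} {n : nat} (q : 'I_n -> R) c :
  (forall c, 0 <= q c) -> q c <= \sum_(c < n) q c.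
Proof.
move=> hq; rewrite (bigD1 c) //=.
have : 0 <= \sum_(i < n | i != c) q i by apply: sumr_ge0.
lra.
Qed.

Lemma Q_compact {R : realType} {n : nat} (phat rho : 'I_n -> R) (eps : R) :
  compact (Qset phat rho eps).
Proof.
apply: (@subclosed_compact _ _ [set v : 'rV[R]_n | forall i, `[(0:R), 1]%classic (v ord0 i)]).
- exact: Q_closed.
- apply: (@rV_compact _ n (fun _ => `[(0:R), 1]%classic)) => i; exact: segment_compact.
move=> q [h1 [h2 h3]] i /=; rewrite in_itv /= h1 /=.
by rewrite -h2; apply: le_sum1.
Qed.

Lemma Q_convex {R : realType} {n : nat} (phat rho : 'I_n -> R) (eps : R) :
  convex_vset (Qset phat rho eps).
Proof.
move=> q1 q2 [a1 [a2 a3]] [b1 [b2 b3]] l hl.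
have E : forall c, (l *: q1 + (1 - l) *: q2) 0 c = l * q1 0 c + (1 - l) * q2 0 c.
  by move=> c; rewrite !mxE.
case/andP: (hl) => l0 l1.
split; [|split].
- by move=> c; rewrite E; have := a1 c; have := b1 c; nra.
- under eq_bigr do rewrite E.
  by rewrite big_split /= -!mulr_sumr a2 b2; lra.
- under eq_bigr do rewrite E.
  have := @phi_convex R n phat rho (fun c => q1 0 c) (fun c => q2 0 c) l a1 b1 hl.
  rewrite /phi /= => h; apply: (le_trans h).
  have : l * phi phat rho (fun c => q1 0 c) <= l * eps by rewrite ler_wpM2l.
  have : (1 - l) * phi phat rho (fun c => q2 0 c) <= (1 - l) * eps by rewrite ler_wpM2l // subr_ge0.
  rewrite /phi; lra.
Qed.


Definition sb {R : realType} {n : nat} (t rho : 'I_n -> R) (b : R) : 'I_n -> R :=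
  fun c => t c / b - rho c.
Definition Fb {R : realType} {n : nat} (p rho t : 'I_n -> R) (b : R) : R :=
  phi p rho (gibbs p (sb t rho b)).

Lemma L_dual {R : realType} {n : nat} (p rho t : 'I_n -> R) (eps b : R) :
  (forall c, 0 < p c) -> \sum_(c < n) p c = 1 -> 0 < b ->
  let a := b * (ln (Zs p (sb t rho b)) - 1) in
  a + b * eps + b * \sum_(c < n) p c * expR ((t c - a) / b - rho c - 1)
  = b * ln (Zs p (sb t rho b)) + b * eps.
Proof.
move=> hp hs b0 a.
have Z0 := Zs_gt0 p (sb t rho b) hp hs.
have -> : \sum_(c < n) p c * expR ((t c - a) / b - rho c - 1) = 1.
  have -> : \sum_(c < n) p c * expR ((t c - a) / b - rho c - 1)
      = \sum_(c < n) p c * expR (sb t rho b c) / Zs p (sb t rho b).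
    apply: eq_bigr => c _.
    have -> : (t c - a) / b - rho c - 1 = sb t rho b c - ln (Zs p (sb t rho b)).
      by rewrite /a /sb; field; rewrite gt_eqF.
    by rewrite expRB lnK ?posrE // mulrA.
  by rewrite -mulr_suml -/(Zs p (sb t rho b)) divff // gt_eqF.
rewrite /a; ring.
Qed.

Lemma L_A {R : realType} {n : nat} (p rho t : 'I_n -> R) (b : R) :
  (forall c, 0 < p c) -> \sum_(c < n) p c = 1 -> 0 < b ->
  \sum_(c < n) gibbs p (sb t rho b) c * t c = b * (Fb p rho t b + ln (Zs p (sb t rho b))).
Proof.
move=> hp hs b0; rewrite /Fb phi_gibbs // subrK mulr_sumr.
apply: eq_bigr => c _; rewrite /sb; field; by rewrite gt_eqF.
Qed.

Lemma row_inQ {R : realType} {n : nat} (p rho q : 'I_n -> R) (eps : R) :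
  (forall c, 0 <= q c) -> \sum_(c < n) q c = 1 -> phi p rho q <= eps ->
  Qset p rho eps (\row_c q c).
Proof.
move=> h1 h2 h3; split; [|split].
- by move=> c; rewrite mxE.
- by under eq_bigr do rewrite mxE.
- by under eq_bigr do rewrite mxE.
Qed.

Definition goalP {R : realType} {n : nat} (p rho t : 'I_n -> R) (eps d : R) :=
  exists alpha beta (q : 'I_n -> R), [/\ 0 < beta, (forall c, 0 <= q c),
     \sum_(c < n) q c = 1, phi p rho q <= eps &
     alpha + beta * eps + beta * \sum_(c < n) p c * expR ((t c - alpha) / beta - rho c - 1)
       <= \sum_(c < n) q c * t c + d].

Lemma good_beta {R : realType} {n : nat} (p rho t : 'I_n -> R) (eps d b : R) :
  (forall c, 0 < p c) -> \sum_(c < n) p c = 1 -> 0 < b ->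
  Fb p rho t b <= eps -> b * (eps - Fb p rho t b) <= d -> goalP p rho t eps d.
Proof.
move=> hp hs b0 hF hd.
exists (b * (ln (Zs p (sb t rho b)) - 1)), b, (gibbs p (sb t rho b)); split => //.
- by move=> c; apply: ltW; apply: gibbs_gt0.
- exact: gibbs_sum1.
- rewrite L_dual // L_A //; lra.
Qed.

Definition qi {R : realType} {n : nat} (p rho : 'I_n -> R) := gibbs p (fun c => - rho c).
Definition Wi {R : realType} {n : nat} (p rho : 'I_n -> R) := Zs p (fun c => - rho c).
Definition gap {R : realType} {n : nat} (p rho t : 'I_n -> R) (b : R) :=
  b * ln (Zs p (sb t rho b)) - b * ln (Wi p rho) - \sum_(c < n) qi p rho c * t c.

Lemma finf {R : realType} {n : nat} (p rho : 'I_n -> R) :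
  (forall c, 0 < p c) -> \sum_(c < n) p c = 1 -> phi p rho (qi p rho) = - ln (Wi p rho).
Proof.
move=> hp hs; rewrite /qi phi_gibbs //.
rewrite (eq_bigr (fun _ => 0)); first by rewrite big1 // sub0r.
by move=> c _; rewrite addNr mulr0.
Qed.

Lemma finf_le {R : realType} {n : nat} (p rho : 'I_n -> R) :
  (forall c, 0 < p c) -> \sum_(c < n) p c = 1 ->
  - ln (Wi p rho) <= \sum_(c < n) p c * rho c.
Proof.
move=> hp hs.
have := @KL_ge0 R n p (qi p rho) (fun c => ltW (hp c)) (fun c => @gibbs_gt0 _ _ p _ c hp hs).
rewrite gibbs_sum1 // hs => /(_ erefl).
have -> : \sum_(c < n) p c * (ln (p c) - ln (qi p rho c)) =
          \sum_(c < n) p c * rho c + ln (Wi p rho).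
  rewrite -[ln (Wi p rho)]mul1r -hs mulr_suml -big_split /=.
  by apply: eq_bigr => c _; rewrite /qi gibbs_ln //; rewrite /Wi; ring.
lra.
Qed.

Lemma mix_beta {R : realType} {n : nat} (p rho t : 'I_n -> R) (eps d b : R) :
  (forall c, 0 < p c) -> \sum_(c < n) p c = 1 -> \sum_(c < n) p c * rho c <= eps ->
  0 < b -> 0 < d ->
  eps < Fb p rho t b -> gap p rho t b <= d -> goalP p rho t eps d.
Proof.
move=> hp hs hpr b0 d0 hF hg.
have hf := finf_le p rho hp hs.
set f := - ln (Wi p rho) in hf.
set F := Fb p rho t b in hF.
have Ff : 0 < F - f by lra.
set lam := (eps - f) / (F - f).
have hlam : lam * (F - f) = eps - f by rewrite /lam; field; rewrite gt_eqF.
have lam0 : 0 <= lam by rewrite /lam; apply: divr_ge0; lra.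
have lam1 : lam <= 1 by rewrite /lam ler_pdivrMr //; lra.
have hl : 0 <= lam <= 1 by rewrite lam0 lam1.
have g0 : forall c, 0 <= gibbs p (sb t rho b) c by move=> c; apply: ltW; apply: gibbs_gt0.
have i0 : forall c, 0 <= qi p rho c by move=> c; apply: ltW; apply: gibbs_gt0.
exists (b * (ln (Zs p (sb t rho b)) - 1)), b,
  (fun c => lam * gibbs p (sb t rho b) c + (1 - lam) * qi p rho c); split => //.
- by move=> c; have := g0 c; have := i0 c; nra.
- by rewrite big_split /= -!mulr_sumr gibbs_sum1 // /qi gibbs_sum1 //; ring.
- apply: (le_trans (@phi_convex _ _ p rho _ _ lam g0 i0 hl)).
  rewrite -/(Fb p rho t b) -/F finf // -/f.
  have -> : eps = lam * (F - f) + f by rewrite hlam; ring.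
  lra.
- rewrite L_dual //.
  under eq_bigr do rewrite mulrDl.
  rewrite big_split /=.
  have E1 : \sum_(c < n) lam * gibbs p (sb t rho b) c * t c
      = lam * \sum_(c < n) gibbs p (sb t rho b) c * t c.
    by rewrite mulr_sumr; apply: eq_bigr => c _; rewrite mulrA.
  have E2 : \sum_(c < n) (1 - lam) * qi p rho c * t c
      = (1 - lam) * \sum_(c < n) qi p rho c * t c.
    by under eq_bigr do rewrite -mulrA; rewrite -mulr_sumr.
  rewrite E1 E2 L_A // -/F.
  move: hg; rewrite /gap -/f.
  set L := ln (Zs p (sb t rho b)).
  set B := \sum_(c < n) qi p rho c * t c.
  move=> hg.
  have key : b * L + b * eps - (lam * (b * (F + L)) + (1 - lam) * B)
           = (1 - lam) * (b * L + b * f - B).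
    have -> : eps = lam * (F - f) + f by rewrite hlam; ring.
    ring.
  have h2 : (1 - lam) * (b * L + b * f - B) <= d.
    have [hp0|hn0] := leP 0 (b * L + b * f - B).
      have : (1 - lam) * (b * L + b * f - B) <= 1 * (b * L + b * f - B).
        by rewrite ler_wpM2r //; lra.
      rewrite /f in hg *; lra.
    have : (1 - lam) * (b * L + b * f - B) <= 0.
      by rewrite mulr_ge0_le0 //; [lra | exact: ltW].
    lra.
  lra.
Qed.


Definition S0 {R : realType} {n : nat} (t : 'I_n -> R) : R :=
  \sum_(c < n) (t c ^+ 2 + `|t c|) + 1.

Lemma S0_ge {R : realType} {n : nat} (t : 'I_n -> R) c :
  t c ^+ 2 <= S0 t /\ `|t c| <= S0 t.
Proof.
have h := @le_sum1 R n (fun c => t c ^+ 2 + `|t c|) c.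
have : t c ^+ 2 + `|t c| <= \sum_(c < n) (t c ^+ 2 + `|t c|).
  by apply: h => i; apply: addr_ge0; [exact: sqr_ge0 | exact: normr_ge0].
have := sqr_ge0 (t c); have := normr_ge0 (t c).
rewrite /S0; lra.
Qed.

Lemma gap_bound {R : realType} {n : nat} (p rho t : 'I_n -> R) (b d : R) :
  (forall c, 0 < p c) -> \sum_(c < n) p c = 1 ->
  0 < b -> 2 * S0 t <= b -> 2 * S0 t <= d * b -> gap p rho t b <= d.
Proof.
move=> hp hs b0 hb hd.
have W0 : 0 < Wi p rho by apply: Zs_gt0.
have q0 : forall c, 0 < qi p rho c by move=> c; apply: gibbs_gt0.
have qs : \sum_(c < n) qi p rho c = 1 by apply: gibbs_sum1.
set Y := Zs (qi p rho) (fun c => t c / b).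
have Y0 : 0 < Y by apply: Zs_gt0.
have ZY : Zs p (sb t rho b) = Wi p rho * Y.
  rewrite /Y /Zs mulr_sumr; apply: eq_bigr => c _.
  rewrite /qi /gibbs /sb -/(Wi p rho) expRD; field; by rewrite gt_eqF.
have hl := @ln_le_sub1 R Y Y0.
have gapE : gap p rho t b = b * ln Y - \sum_(c < n) qi p rho c * t c.
  by rewrite /gap ZY lnM ?posrE //; ring.
have hgb : gap p rho t b <= \sum_(c < n) qi p rho c * (b * expR (t c / b) - b - t c).
  rewrite gapE.
  have -> : \sum_(c < n) qi p rho c * (b * expR (t c / b) - b - t c)
     = b * (Y - 1) - \sum_(c < n) qi p rho c * t c.
    rewrite (eq_bigr (fun c => b * (qi p rho c * expR (t c / b)) - b * qi p rho c - qi p rho c * t c)); last by move=> c _; ring.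
    rewrite !sumrB -!mulr_sumr qs /Y /Zs; ring.
  have : b * ln Y <= b * (Y - 1) by rewrite ler_wpM2l // ltW.
  lra.
apply: (le_trans hgb).
apply: (@le_trans _ _ (\sum_(c < n) qi p rho c * (2 * S0 t / b))).
  apply: ler_sum => c _; apply: ler_wpM2l; first exact: ltW.
  have [h2 h1] := S0_ge t c.
  have hx : `|t c / b| <= 1 / 2.
    rewrite normrM normfV (gtr0_norm b0) ler_pdivrMr //.
    have : 1 / 2 * b >= S0 t by lra.
    lra.
  have := @exp_quad _ _ hx.
  move/(ler_wpM2l (ltW b0)) => h.
  have e1 : b * (expR (t c / b) - 1 - t c / b) = b * expR (t c / b) - b - t c.
    by field; rewrite gt_eqF.
  have e2 : b * (2 * (t c / b) ^+ 2) = 2 * t c ^+ 2 / b.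
    by field; rewrite gt_eqF.
  rewrite e1 e2 in h; apply: (le_trans h).
  rewrite ler_pM2r ?invr_gt0 //; lra.
rewrite -mulr_suml qs mul1r ler_pdivrMr //.
Qed.

Lemma cont_pe {R : realType} (pc tc rc b : R) : 0 < b ->
  {for b, continuous (fun b : R => pc * expR (tc / b - rc))}.
Proof.
move=> b0.
have hs : {for b, continuous (fun b : R => tc / b - rc)}.
  apply: (@continuousB R R^o R (fun b => tc / b) (fun _ => rc) b); last exact: cvg_cst.
  apply: (@continuousM R R (fun _ => tc) (fun b => b^-1) b); first exact: cvg_cst.
  apply: (@continuousV R R (fun b => b) b); first by rewrite gt_eqF.
  exact: cvg_id.
apply: (@continuousM R R (fun _ => pc) (fun b => expR (tc / b - rc)) b); first exact: cvg_cst.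
apply: (@continuous_comp R R R (fun b => tc / b - rc) expR b hs).
exact: continuous_expR.
Qed.

Lemma Fb_cont {R : realType} {n : nat} (p rho t : 'I_n -> R) (b : R) :
  (forall c, 0 < p c) -> \sum_(c < n) p c = 1 -> 0 < b ->
  {for b, continuous (Fb p rho t)}.
Proof.
move=> hp hs b0.
have hZ : {for b, continuous (fun b => Zs p (sb t rho b))}.
  by apply: (@sum_cont R R n (fun c b => p c * expR (t c / b - rho c))) => c; apply: cont_pe.
have hg : forall c, {for b, continuous (fun b => gibbs p (sb t rho b) c)}.
  move=> c.
  apply: (@continuousM R R (fun b => p c * expR (t c / b - rho c)) (fun b => (Zs p (sb t rho b))^-1) b).
    exact: cont_pe.
  apply: (@continuousV R R (fun b => Zs p (sb t rho b)) b) => //.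
  by rewrite gt_eqF // Zs_gt0.
apply: (@sum_cont R R n (fun c b => (fun z => z * (ln z - ln (p c) + rho c)) (gibbs p (sb t rho b) c))) => c.
apply: (@continuous_comp R R R (fun b => gibbs p (sb t rho b) c) (fun z => z * (ln z - ln (p c) + rho c)) b (hg c)).
exact: term_cont.
Qed.


Lemma key {R : realType} {n : nat} (p rho t : 'I_n -> R) (eps d : R) :
  (forall c, 0 < p c) -> \sum_(c < n) p c = 1 -> 0 <= eps -> (forall c, 0 <= rho c) ->
  \sum_(c < n) p c * rho c <= eps -> 0 < d -> goalP p rho t eps d.
Proof.
move=> hp hs he hr hpr d0.
have S00 : 0 < S0 t.
  rewrite /S0; apply: ltr_pwDr => //.
  by apply: sumr_ge0 => c _; apply: addr_ge0; [exact: sqr_ge0 | exact: normr_ge0].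
set bs := d / (eps + 1).
have bs0 : 0 < bs by rewrite /bs divr_gt0 //; lra.
have hFge : forall b, 0 <= Fb p rho t b.
  move=> b; apply: phi_ge0 => //.
    by move=> c; apply: ltW; apply: gibbs_gt0.
  exact: gibbs_sum1.
have [hs1|hs1] := leP (Fb p rho t bs) eps.
  apply: (@good_beta _ _ p rho t eps d bs hp hs bs0 hs1).
  have : bs * (eps + 1) = d by rewrite /bs; field; lra.
  have := hFge bs; nra.
set bL := bs + 2 * S0 t + 2 * S0 t / d.
have hSd : 2 * S0 t / d >= 0 by apply: divr_ge0; lra.
have bL0 : 0 < bL by rewrite /bL; lra.
have [hL|hL] := leP (Fb p rho t bL) eps; last first.
  apply: (@mix_beta _ _ p rho t eps d bL hp hs hpr bL0 d0 hL).
  apply: gap_bound => //; first by rewrite /bL; lra.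
  have : d * (2 * S0 t / d) = 2 * S0 t by field; lra.
  have : d * (2 * S0 t / d) <= d * bL by rewrite ler_wpM2l //; [lra | rewrite /bL; lra].
  lra.
have [b hb hFb] : exists2 b, b \in `[bs, bL] & Fb p rho t b = eps.
  apply: IVT; first by rewrite /bL; lra.
    apply: continuous_in_subspaceT => x.
    rewrite inE /= in_itv /= => /andP [h1 h2].
    apply: Fb_cont => //; lra.
  rewrite ge_min le_max; apply/andP; split; apply/orP; [right|left]; lra.
move: hb; rewrite in_itv /= => /andP [h1 h2].
have b0 : 0 < b by lra.
apply: (@good_beta _ _ p rho t eps d b hp hs b0); rewrite hFb //; lra.
Qed.


Theorem lemmaB1 (R : realType) (C : nat) (phat rho : 'I_C -> R) (eps : R) :
  (forall c, 0 < phat c) -> \sum_(c < C) phat c = 1 ->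
  0 <= eps -> (forall c, 0 <= rho c) ->
  \sum_(c < C) phat c * rho c <= eps ->
  [/\ compact (Qset phat rho eps), convex_vset (Qset phat rho eps) &
      forall t : 'I_C -> R,
        support_fun (Qset phat rho eps) t =
        ereal_inf [set x : \bar R | exists (alpha beta : R), 0 < beta /\
                     x = (alpha + beta * eps + beta * \sum_(c < C)
                          phat c * expR ((t c - alpha) / beta - rho c - 1))%:E]].
Proof.
move=> hp hs he hr hpr; split; [exact: Q_compact | exact: Q_convex | move=> t].
apply/le_anti/andP; split.
- apply: ge_ereal_sup => _ [q Qq <-].
  apply: le_ereal_inf_tmp => _ [a [b [b0 ->]]].
  rewrite lee_fin; case: Qq => [h1 [h2 h3]].
  exact: (@weak_dual _ _ phat rho (fun c => q 0 c) t eps a b hp h1 h2 h3 b0).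
- apply/lee_addgt0Pr => d d0.
  have [a [b [q [b0 q0 qs qphi hle]]]] := @key _ _ phat rho t eps d hp hs he hr hpr d0.
  apply: (@le_trans _ _ ((\sum_(c < C) q c * t c)%:E + d%:E)).
    apply: (@le_trans _ _ (a + b * eps + b * \sum_(c < C)
                          phat c * expR ((t c - a) / b - rho c - 1))%:E).
      by apply: ereal_inf_lbound; exists a, b; split.
    by rewrite -EFinD lee_fin.
  apply: leeD2r; apply: ereal_sup_ubound.
  exists (\row_c q c); first exact: row_inQ.
  by under eq_bigr do rewrite mxE.
Qed.
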